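(* Let $G$ be a group, and on the set $G$ define $a*b=b^{-1}ab$ (the conjugation quandle $\mathrm{Conj}(G)$) and $a\circ b=ba^{-1}b$ (the core quandle $\mathrm{Core}(G)$). Then for all $a,b,c\in G$, $$(a\circ b)*c=(a*c)\circ(b*c).$$ Moreover, if $g^2$ lies in the center of $G$ for every $g\in G$, then for all $a,b,c\in G$, $$(a*b)\circ c=(a\circ c)*(b\circ c).$$ *)

(* Defs.v *)
Record group := Group {
  gcar :> Type;
  gmul : gcar -> gcar -> gcar;
  gone : gcar;
  ginv : gcar -> gcar;
  gmulA : forall x y z, gmul x (gmul y z) = gmul (gmul x y) z;
  gmul1l : forall x, gmul gone x = x;
  gmulVl : forall x, gmul (ginv x) x = gone
}.

Definition conj_op (G : group) (a b : G) : G := gmul G (gmul G (ginv G b) a) b.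

Definition core_op (G : group) (a b : G) : G := gmul G (gmul G b (ginv G a)) b.

Definition in_center (G : group) (z : G) : Prop := forall x : G, gmul G z x = gmul G x z.

(* Main.v *)
Require Import Defs.

Section L.
Variable G : group.
Notation "x * y" := (gmul G x y).
Notation "x ^-1" := (ginv G x) (at level 2).
Notation "1" := (gone G).

Lemma mulV x : x * x^-1 = 1.
Proof.
  transitivity (((x^-1)^-1 * x^-1) * (x * x^-1)).
  { rewrite gmulVl, gmul1l. reflexivity. }
  rewrite <- gmulA, (gmulA G x^-1 x), gmulVl, gmul1l. apply gmulVl.
Qed.
Lemma mul1r x : x * 1 = x.
Proof. rewrite <- (gmulVl G x), gmulA, mulV, gmul1l. reflexivity. Qed.
Lemma KV x y : x^-1 * (x * y) = y.
Proof. rewrite gmulA, gmulVl, gmul1l. reflexivity. Qed.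
Lemma VK x y : x * (x^-1 * y) = y.
Proof. rewrite gmulA, mulV, gmul1l. reflexivity. Qed.
Lemma inv_uniq x y : x * y = 1 -> y = x^-1.
Proof. intro H. rewrite <- (KV x y), H, mul1r. reflexivity. Qed.
Lemma invM x y : (x * y)^-1 = y^-1 * x^-1.
Proof. symmetry. apply inv_uniq. rewrite <- gmulA, VK, mulV. reflexivity. Qed.
Lemma invK x : (x^-1)^-1 = x.
Proof. symmetry. apply inv_uniq. apply gmulVl. Qed.
End L.

Ltac norm := repeat (rewrite ?invM, ?invK, <- ?gmulA, ?KV, ?VK, ?mul1r, ?gmul1l, ?gmulVl, ?mulV).

Theorem proposition4p17 (G : group) :
  (forall a b c : G, conj_op G (core_op G a b) c = core_op G (conj_op G a c) (conj_op G b c)) /\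
  ((forall g : G, in_center G (gmul G g g)) ->
   forall a b c : G, core_op G (conj_op G a b) c = conj_op G (core_op G a c) (core_op G b c)).
Proof.
  unfold conj_op, core_op. split.
  - intros a b c. norm. reflexivity.
  - intros Hc a b c. norm.
    assert (Sw : forall x y : G, gmul G (ginv G x) (gmul G y x) = gmul G x (gmul G y (ginv G x))).
    { intros x y.
      transitivity (gmul G (ginv G x) (gmul G (gmul G y (ginv G x)) (gmul G x x))).
      { norm. reflexivity. }
      rewrite <- (Hc x (gmul G y (ginv G x))). norm. reflexivity. }
    assert (E : gmul G c (gmul G c (gmul G (ginv G b) c)) = gmul G (ginv G b) (gmul G c (gmul G c c))).
    { rewrite (gmulA G c c), Hc. norm. reflexivity. }
    rewrite E.
    transitivity (gmul G (ginv G c) (gmul G (gmul G b (gmul G (ginv G a) (ginv G b))) (gmul G (gmul G c c) c))).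
    2: { norm. reflexivity. }
    rewrite <- Sw.
    assert (E2 : forall w : G, gmul G w (gmul G (gmul G c c) c) = gmul G (gmul G c c) (gmul G w c)).
    { intro w. rewrite (Hc c (gmul G w c)). norm. reflexivity. }
    rewrite E2. norm. reflexivity.
Qed.
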